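(* Let $e$ be an expression, $n$ a principal, $\theta$ an annotated type and $\Pi\subseteq\mathsf{Privileges}$ such that the static-analysis judgement $\varnothing;\,n\vdash e:\theta,\ \Pi$ is derivable. Then for every $P\subseteq\mathsf{Privileges}$ with $\Pi\subseteq P$ we have $[\![\varnothing\vdash e:\theta^*]\!]\,n\,P\,\{\}\neq\star$.
   Context: Fix sets $\mathsf{Principals}$ and $\mathsf{Privileges}$ and an access control list $\mathcal{A}:\mathsf{Principals}\to\mathcal{P}(\mathsf{Privileges})$. Language. Types: $t::=\mathtt{bool}\mid t_1\to t_2$. Expressions ($x,f$ variables, $n$ a principal, $p$ a privilege): $e::=\mathtt{true}\mid x\mid \mathtt{if}\ e\ \mathtt{then}\ e_1\ \mathtt{else}\ e_2\mid \lambda x.e\mid e_1\,e_2\mid \mathtt{letrec}\ f(x)=e_1\ \mathtt{in}\ e_2\mid \mathtt{signs}\ n\ e\mid \mathtt{dopriv}\ p\ \mathtt{in}\ e\mid \mathtt{check}\ p\ \mathtt{for}\ e\mid \mathtt{test}\ p\ \mathtt{then}\ e_1\ \mathtt{else}\ e_2$. Typing judgements $D\vdash e:t$ ($D$ a finite map from variables to types) follow the simply typed rules: $\mathtt{true}:\mathtt{bool}$; $x:D(x)$; the conditional needs a $\mathtt{bool}$ guard and branches of a common type; $\lambda$ and application as usual; $\mathtt{letrec}\ f(x)=e_1\ \mathtt{in}\ e_2$ has type $t$ if $D,f:t_1\to t_2,x:t_1\vdash e_1:t_2$ and $D,f:t_1\to t_2\vdash e_2:t$; $\mathtt{signs}$,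 $\mathtt{dopriv}$, $\mathtt{check}$ have the type of their body; $\mathtt{test}\ p\ \mathtt{then}\ e_1\ \mathtt{else}\ e_2$ has type $t$ if both $e_1,e_2$ do. Eager denotational semantics. A cpo is a poset with lubs of ascending chains (no least element required). $\bot,\star$ are two distinct values that are neither booleans nor functions. For a cpo $C$, $C_{\bot\star}=C\cup\{\bot,\star\}$ with $u\le v$ iff $u=\bot$, or $u=v$, or $u,v\in C$ and $u\le v$ in $C$. $[\![\mathtt{bool}]\!]=\{\mathsf{true},\mathsf{false}\}$ and $\mathcal{P}(\mathsf{Privileges})$ are ordered by equality; $[\![t_1\to t_2]\!]=\mathcal{P}(\mathsf{Privileges})\to[\![t_1]\!]\to[\![t_2]\!]_{\bot\star}$ (continuous functions, pointwise order). $[\![D]\!]$ is the set of records $h$ with $h.x\in[\![D(x)]\!]$; $h[x\mapsto d]$ is extension/update; $\{\}$ is the empty record. A judgement denotes $[\![D\vdash e:t]\!]\in\mathsf{Principals}\to\mathcal{P}(\mathsf{Privileges})\to[\![D]\!]\to[\![t]\!]_{\bot\star}$, written $[\![e]\!]nPh$ below. The metalanguage ''let $d=E_1$ in $E_2$'' yields $E_1$ if $E_1\in\{\bot,\star\}$ and otherwise $E_2$ with $d$ bound to $E_1$; write $P\sqcup_n\{p\}=P\cup\{p\}$ if $p\in\mathcal{A}(n)$ and $=P$ otherwise; $\mathit{fix}$ is least fixed point. Equations: $[\![\mathtt{true}]\!]nPh=\mathsf{true}$; $[\![x]\!]nPh=h.x$; $[\![\mathtt{if}\ e\ \mathtt{then}\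 e_1\ \mathtt{else}\ e_2]\!]nPh=$ let $b=[\![e]\!]nPh$ in (if $b$ then $[\![e_1]\!]nPh$ else $[\![e_2]\!]nPh$); $[\![\lambda x.e]\!]nPh=\lambda P'.\lambda d.[\![e]\!]nP'(h[x\mapsto d])$; $[\![e_1e_2]\!]nPh=$ let $f=[\![e_1]\!]nPh$ in let $d=[\![e_2]\!]nPh$ in $fPd$; $[\![\mathtt{letrec}\ f(x)=e_1\ \mathtt{in}\ e_2]\!]nPh=[\![e_2]\!]nP(h[f\mapsto \mathit{fix}\,G])$ where $G(g)=\lambda P'.\lambda d.[\![e_1]\!]nP'(h[f\mapsto g,x\mapsto d])$; $[\![\mathtt{signs}\ n'\ e]\!]nPh=[\![e]\!]n'(P\cap\mathcal{A}(n'))h$; $[\![\mathtt{dopriv}\ p\ \mathtt{in}\ e]\!]nPh=[\![e]\!]n(P\sqcup_n\{p\})h$; $[\![\mathtt{check}\ p\ \mathtt{for}\ e]\!]nPh=$ if $p\in P$ then $[\![e]\!]nPh$ else $\star$; $[\![\mathtt{test}\ p\ \mathtt{then}\ e_1\ \mathtt{else}\ e_2]\!]nPh=$ if $p\in P$ then $[\![e_1]\!]nPh$ else $[\![e_2]\!]nPh$. Static analysis. Annotated types $\theta::=\mathtt{bool}\mid \theta_1\xrightarrow{\Pi}\theta_2$ with $\Pi\subseteq\mathsf{Privileges}$. Erasure: $\mathtt{bool}^*=\mathtt{bool}$, $(\theta_1\xrightarrow{\Pi}\theta_2)^*=\theta_1^*\to\theta_2^*$; for an annotated context $\Delta$, $\Delta^*$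 erases pointwise. Subtyping $\le$ is the least relation with $\mathtt{bool}\le\mathtt{bool}$ and $\theta_1\xrightarrow{\Pi_1}\theta_1'\le\theta_2\xrightarrow{\Pi_2}\theta_2'$ when $\theta_2\le\theta_1$, $\theta_1'\le\theta_2'$, $\Pi_1\subseteq\Pi_2$. Judgements $\Delta;\,n\vdash e:\theta,\ \Pi$ are derived by: $\Delta;n\vdash\mathtt{true}:\mathtt{bool},\varnothing$; $\Delta,x:\theta;n\vdash x:\theta,\varnothing$; from $\Delta,x:\theta_1;n\vdash e:\theta_2,\Pi$ infer $\Delta;n\vdash\lambda x.e:\theta_1\xrightarrow{\Pi}\theta_2,\varnothing$; from $\Delta;n\vdash e_1:\theta_1\xrightarrow{\Pi}\theta_2,\Pi_1$, $\Delta;n\vdash e_2:\theta_1',\Pi_2$, $\theta_1'\le\theta_1$ infer $\Delta;n\vdash e_1e_2:\theta_2,\Pi\cup\Pi_1\cup\Pi_2$; from $\Delta;n\vdash e:\mathtt{bool},\Pi_1$, $\Delta;n\vdash e_1:\theta,\Pi_2$, $\Delta;n\vdash e_2:\theta,\Pi_3$ infer $\Delta;n\vdash \mathtt{if}\ e\ \mathtt{then}\ e_1\ \mathtt{else}\ e_2:\theta,\Pi_1\cup\Pi_2\cup\Pi_3$; from $\Delta,f:\theta_1\xrightarrow{\Pi}\theta_2,x:\theta_1;n\vdash e_1:\theta_2,\Pi$ and $\Delta,f:\theta_1\xrightarrow{\Pi}\theta_2;n\vdash e_2:\theta,\Pi_1$ infer $\Delta;n\vdash\mathtt{letrec}\ f(x)=e_1\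 \mathtt{in}\ e_2:\theta,\Pi\cup\Pi_1$; from $\Delta;n\vdash e:\theta,\Pi$ infer $\Delta;n\vdash\mathtt{check}\ p\ \mathtt{for}\ e:\theta,\Pi\cup\{p\}$; from $\Delta;n\vdash e:\theta,(\Pi\sqcup_n\{p\})$ infer $\Delta;n\vdash\mathtt{dopriv}\ p\ \mathtt{in}\ e:\theta,\Pi$; from $\Delta;n'\vdash e:\theta,\Pi$ and $\Pi\subseteq\mathcal{A}(n')$ infer $\Delta;n\vdash\mathtt{signs}\ n'\ e:\theta,\Pi$; from $\Delta;n\vdash e_1:\theta,\Pi_1$ and $\Delta;n\vdash e_2:\theta,\Pi_2$ infer $\Delta;n\vdash\mathtt{test}\ p\ \mathtt{then}\ e_1\ \mathtt{else}\ e_2:\theta,\Pi_1\cup\Pi_2$. *)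

(* Defs.v *)
From Stdlib Require Import Arith ClassicalEpsilon ClassicalDescription.



Definition pset (V : Type) := V -> Prop.
Definition psubset {V} (A B : pset V) : Prop := forall x, A x -> B x.
Definition pempty {V} : pset V := fun _ => False.
Definition psingle {V} (p : V) : pset V := fun q => q = p.
Definition punion {V} (A B : pset V) : pset V := fun q => A q \/ B q.
Definition pinter {V} (A B : pset V) : pset V := fun q => A q /\ B q.

Definition sqcup {Pr Pv : Type} (A : Pr -> pset Pv) (n : Pr) (P : pset Pv) (p : Pv)
  : pset Pv :=
  if excluded_middle_informative (A n p) then punion P (psingle p) else P.

Definition var := nat.

Inductive ty := TBool | TArr (t1 t2 : ty).

Inductive expr (Pr Pv : Type) :=
| ETrue
| EVar (x : var)
| EIf (e e1 e2 : expr Pr Pv)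
| ELam (x : var) (e : expr Pr Pv)
| EApp (e1 e2 : expr Pr Pv)
| ELetrec (f x : var) (e1 e2 : expr Pr Pv)
| ESigns (n : Pr) (e : expr Pr Pv)
| EDopriv (p : Pv) (e : expr Pr Pv)
| ECheck (p : Pv) (e : expr Pr Pv)
| ETest (p : Pv) (e1 e2 : expr Pr Pv).
Arguments ETrue {Pr Pv}.
Arguments EVar {Pr Pv} x.
Arguments EIf {Pr Pv} e e1 e2.
Arguments ELam {Pr Pv} x e.
Arguments EApp {Pr Pv} e1 e2.
Arguments ELetrec {Pr Pv} f x e1 e2.
Arguments ESigns {Pr Pv} n e.
Arguments EDopriv {Pr Pv} p e.
Arguments ECheck {Pr Pv} p e.
Arguments ETest {Pr Pv} p e1 e2.

Definition ext {T} (D : var -> option T) (x : var) (t : T) : var -> option T :=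
  fun y => if Nat.eqb y x then Some t else D y.
Definition emptyc {T} : var -> option T := fun _ => None.

Definition ctx := var -> option ty.

Inductive has_type {Pr Pv : Type} : ctx -> expr Pr Pv -> ty -> Type :=
| HT_true D : has_type D ETrue TBool
| HT_var D x t : D x = Some t -> has_type D (EVar x) t
| HT_if D e e1 e2 t :
    has_type D e TBool -> has_type D e1 t -> has_type D e2 t ->
    has_type D (EIf e e1 e2) t
| HT_lam D x e t1 t2 :
    has_type (ext D x t1) e t2 -> has_type D (ELam x e) (TArr t1 t2)
| HT_app D e1 e2 t1 t2 :
    has_type D e1 (TArr t1 t2) -> has_type D e2 t1 -> has_type D (EApp e1 e2) t2
| HT_letrec D f x e1 e2 t1 t2 t :
    has_type (ext (ext D f (TArr t1 t2)) x t1) e1 t2 ->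
    has_type (ext D f (TArr t1 t2)) e2 t ->
    has_type D (ELetrec f x e1 e2) t
| HT_signs D n e t : has_type D e t -> has_type D (ESigns n e) t
| HT_dopriv D p e t : has_type D e t -> has_type D (EDopriv p e) t
| HT_check D p e t : has_type D e t -> has_type D (ECheck p e) t
| HT_test D p e1 e2 t :
    has_type D e1 t -> has_type D e2 t -> has_type D (ETest p e1 e2) t.

Inductive lift (A : Type) := Bot | Star | Val (a : A).
Arguments Bot {A}.
Arguments Star {A}.
Arguments Val {A} a.

(** Carriers: [[bool]] = bool, [[t1 -> t2]] = P(Priv) -> [[t1]] -> [[t2]]_{⊥⋆}.
    The restriction to continuous functions and the order are given by [cpo]. *)
Fixpoint sem (Pv : Type) (t : ty) : Type :=
  match t with
  | TBool => bool
  | TArr t1 t2 => pset Pv -> sem Pv t1 -> lift (sem Pv t2)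
  end.

Definition leL {A} (le : A -> A -> Prop) (u v : lift A) : Prop :=
  u = Bot \/ u = v \/ exists a b, u = Val a /\ v = Val b /\ le a b.
Definition domL {A} (dm : A -> Prop) (u : lift A) : Prop :=
  u = Bot \/ u = Star \/ exists a, u = Val a /\ dm a.

Definition chain {A} (dm : A -> Prop) (le : A -> A -> Prop) (c : nat -> A) : Prop :=
  (forall k, dm (c k)) /\ (forall k, le (c k) (c (S k))).
Definition is_lub {A} (dm : A -> Prop) (le : A -> A -> Prop) (c : nat -> A) (x : A)
  : Prop :=
  dm x /\ (forall k, le (c k) x) /\
  (forall y, dm y -> (forall k, le (c k) y) -> le x y).

(** Elements of
    [[t1 -> t2]] are the continuous (monotone, lub-preserving) functions,
    P(Privileges) being discretely ordered; the order is pointwise. *)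
Fixpoint cpo (Pv : Type) (t : ty) : (sem Pv t -> Prop) * (sem Pv t -> sem Pv t -> Prop) :=
  match t return (sem Pv t -> Prop) * (sem Pv t -> sem Pv t -> Prop) with
  | TBool => (fun _ => True, fun a b => a = b)
  | TArr t1 t2 =>
      let d1 := fst (cpo Pv t1) in let l1 := snd (cpo Pv t1) in
      let d2 := fst (cpo Pv t2) in let l2 := snd (cpo Pv t2) in
      ((fun f : sem Pv (TArr t1 t2) =>
          (forall P d, d1 d -> domL d2 (f P d)) /\
          (forall P d d', d1 d -> d1 d' -> l1 d d' -> leL l2 (f P d) (f P d')) /\
          (forall P c x, chain d1 l1 c -> is_lub d1 l1 c x ->
             is_lub (domL d2) (leL l2) (fun k => f P (c k)) (f P x))),
       (fun f g : sem Pv (TArr t1 t2) => forall P d, d1 d -> leL l2 (f P d) (g P d)))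
  end.

Definition dom (Pv : Type) (t : ty) : sem Pv t -> Prop := fst (cpo Pv t).
Definition le (Pv : Type) (t : ty) : sem Pv t -> sem Pv t -> Prop := snd (cpo Pv t).

(** least fixed point of G in the domain (dm, le); [dflt] is only used if
    no least fixed point exists (which does not happen for continuous G). *)
Definition lfp {A} (dm : A -> Prop) (le : A -> A -> Prop) (G : A -> A) (dflt : A) : A :=
  epsilon (inhabits dflt)
    (fun g => dm g /\ le (G g) g /\ le g (G g) /\
       forall g', dm g' -> le (G g') g' -> le g' (G g') -> le g g').

Definition envty (Pv : Type) (o : option ty) : Type :=
  match o with None => unit | Some t => sem Pv t end.
Definition env (Pv : Type) (D : ctx) : Type := forall y, envty Pv (D y).
Definition empty_env (Pv : Type) : env Pv emptyc := fun _ => tt.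

Definition upd {Pv : Type} {D : ctx} (h : env Pv D) (x : var) (t : ty) (d : sem Pv t)
  : env Pv (ext D x t) :=
  fun y => match Nat.eqb y x as b return envty Pv (if b then Some t else D y) with
           | true => d
           | false => h y
           end.

Definition lookup {Pv : Type} {D : ctx} {x : var} {t : ty} (h : env Pv D)
  (Hx : D x = Some t) : sem Pv t :=
  match Hx in _ = o return envty Pv o with eq_refl => h x end.

Definition bindL {A B} (u : lift A) (k : A -> lift B) : lift B :=
  match u with Bot => Bot | Star => Star | Val a => k a end.

Fixpoint den {Pr Pv : Type} (A : Pr -> pset Pv) {D : ctx} {e : expr Pr Pv} {t : ty}
  (d : has_type D e t) {struct d} : Pr -> pset Pv -> env Pv D -> lift (sem Pv t) :=
  match d in has_type D e t return Pr -> pset Pv -> env Pv D -> lift (sem Pv t) with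
  | HT_true _ => fun n P h => Val true
  | HT_var _ _ _ Hx => fun n P h => Val (lookup h Hx)
  | HT_if _ _ _ _ _ d0 d1 d2 => fun n P h =>
      bindL (den A d0 n P h) (fun b : bool => if b then den A d1 n P h else den A d2 n P h)
  | HT_lam _ x _ t1 t2 d0 => fun n P h =>
      Val ((fun P' (v : sem Pv t1) => den A d0 n P' (upd h x t1 v)) : sem Pv (TArr t1 t2))
  | HT_app _ _ _ t1 t2 d1 d2 => fun n P h =>
      bindL (den A d1 n P h) (fun f : sem Pv (TArr t1 t2) =>
        bindL (den A d2 n P h) (fun v => f P v))
  | HT_letrec _ f x _ _ t1 t2 _ d1 d2 => fun n P h =>
      let G := fun g : sem Pv (TArr t1 t2) =>
        ((fun P' (v : sem Pv t1) =>
            den A d1 n P' (upd (upd h f (TArr t1 t2) g) x t1 v)) : sem Pv (TArr t1 t2)) in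
      den A d2 n P
        (upd h f (TArr t1 t2)
           (lfp (dom Pv (TArr t1 t2)) (le Pv (TArr t1 t2)) G
                ((fun _ _ => Bot) : sem Pv (TArr t1 t2))))
  | HT_signs _ n' _ _ d0 => fun n P h => den A d0 n' (pinter P (A n')) h
  | HT_dopriv _ p _ _ d0 => fun n P h => den A d0 n (sqcup A n P p) h
  | HT_check _ p _ _ d0 => fun n P h =>
      if excluded_middle_informative (P p) then den A d0 n P h else Star
  | HT_test _ p _ _ _ d1 d2 => fun n P h =>
      if excluded_middle_informative (P p) then den A d1 n P h else den A d2 n P h
  end.

Inductive aty (Pv : Type) := ABool | AArr (th1 : aty Pv) (Pi : pset Pv) (th2 : aty Pv).
Arguments ABool {Pv}.
Arguments AArr {Pv} th1 Pi th2.

Fixpoint erase {Pv} (th : aty Pv) : ty :=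
  match th with
  | ABool => TBool
  | AArr th1 _ th2 => TArr (erase th1) (erase th2)
  end.

Inductive subty {Pv} : aty Pv -> aty Pv -> Prop :=
| sub_bool : subty ABool ABool
| sub_arr th1 Pi1 th1' th2 Pi2 th2' :
    subty th2 th1 -> subty th1' th2' -> psubset Pi1 Pi2 ->
    subty (AArr th1 Pi1 th1') (AArr th2 Pi2 th2').

Inductive anal {Pr Pv : Type} (A : Pr -> pset Pv)
  : (var -> option (aty Pv)) -> Pr -> expr Pr Pv -> aty Pv -> pset Pv -> Prop :=
| AN_true G n : anal A G n ETrue ABool pempty
| AN_var G n x th : G x = Some th -> anal A G n (EVar x) th pempty
| AN_lam G n x e th1 th2 Pi :
    anal A (ext G x th1) n e th2 Pi -> anal A G n (ELam x e) (AArr th1 Pi th2) pempty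
| AN_app G n e1 e2 th1 th1' th2 Pi Pi1 Pi2 :
    anal A G n e1 (AArr th1 Pi th2) Pi1 -> anal A G n e2 th1' Pi2 -> subty th1' th1 ->
    anal A G n (EApp e1 e2) th2 (punion Pi (punion Pi1 Pi2))
| AN_if G n e e1 e2 th Pi1 Pi2 Pi3 :
    anal A G n e ABool Pi1 -> anal A G n e1 th Pi2 -> anal A G n e2 th Pi3 ->
    anal A G n (EIf e e1 e2) th (punion Pi1 (punion Pi2 Pi3))
| AN_letrec G n f x e1 e2 th1 th2 th Pi Pi1 :
    anal A (ext (ext G f (AArr th1 Pi th2)) x th1) n e1 th2 Pi ->
    anal A (ext G f (AArr th1 Pi th2)) n e2 th Pi1 ->
    anal A G n (ELetrec f x e1 e2) th (punion Pi Pi1)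
| AN_check G n p e th Pi :
    anal A G n e th Pi -> anal A G n (ECheck p e) th (punion Pi (psingle p))
| AN_dopriv G n p e th Pi :
    anal A G n e th (sqcup A n Pi p) -> anal A G n (EDopriv p e) th Pi
| AN_signs G n n' e th Pi :
    anal A G n' e th Pi -> psubset Pi (A n') -> anal A G n (ESigns n' e) th Pi
| AN_test G n p e1 e2 th Pi1 Pi2 :
    anal A G n e1 th Pi1 -> anal A G n e2 th Pi2 ->
    anal A G n (ETest p e1 e2) th (punion Pi1 Pi2).

(* Main.v *)
Require Import Defs.
From Stdlib Require Import Arith Lia ClassicalEpsilon ClassicalDescription Classical.

Section Dom.
Variable Pv : Type.

Lemma dom_arr t1 t2 (f : sem Pv (TArr t1 t2)) :
  dom Pv (TArr t1 t2) f <->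
  ((forall P d, dom Pv t1 d -> domL (dom Pv t2) (f P d)) /\
   (forall P d d', dom Pv t1 d -> dom Pv t1 d' -> le Pv t1 d d' -> leL (le Pv t2) (f P d) (f P d')) /\
   (forall P c x, chain (dom Pv t1) (le Pv t1) c -> is_lub (dom Pv t1) (le Pv t1) c x ->
      is_lub (domL (dom Pv t2)) (leL (le Pv t2)) (fun k => f P (c k)) (f P x))).
Proof. reflexivity. Qed.

Lemma le_arr t1 t2 (f g : sem Pv (TArr t1 t2)) :
  le Pv (TArr t1 t2) f g <-> (forall P d, dom Pv t1 d -> leL (le Pv t2) (f P d) (g P d)).
Proof. reflexivity. Qed.

Lemma le_bool (a b : sem Pv TBool) : le Pv TBool a b <-> a = b.
Proof. reflexivity. Qed.

Lemma leL_refl {X} (l : X -> X -> Prop) u : leL l u u.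
Proof. right; left; reflexivity. Qed.

Lemma leL_trans {X} (l : X -> X -> Prop) (Ht : forall a b c, l a b -> l b c -> l a c) u v w :
  leL l u v -> leL l v w -> leL l u w.
Proof.
  intros [H1|[H1|(a&b&->&->&Hab)]] H2.
  - left; auto.
  - subst; auto.
  - destruct H2 as [H2|[H2|(b'&c&H2&->&Hbc)]].
    + discriminate.
    + subst. right;right. exists a, b; auto.
    + injection H2 as <-. right; right; exists a, c; eauto.
Qed.

Lemma le_refl t x : le Pv t x x.
Proof. induction t. reflexivity. apply le_arr; intros; apply leL_refl. Qed.

Lemma le_trans t x y z : le Pv t x y -> le Pv t y z -> le Pv t x z.
Proof.
  revert x y z; induction t; intros x y z H1 H2.
  - apply le_bool in H1; apply le_bool in H2; apply le_bool; congruence.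
  - apply le_arr; intros P d Hd. apply le_arr in H1; apply le_arr in H2.
    eapply leL_trans; [exact IHt2| apply H1 | apply H2]; auto.
Qed.

Lemma leL_Star {X} (l : X -> X -> Prop) v : leL l Star v -> v = Star.
Proof. intros [H|[H|(a&b&H&_)]]; congruence. Qed.
Lemma leL_Bot {X} (l : X -> X -> Prop) u : leL l u Bot -> u = Bot.
Proof. intros [H|[H|(a&b&_&H&_)]]; congruence. Qed.
Lemma leL_Val {X} (l : X -> X -> Prop) a v : leL l (Val a) v -> exists b, v = Val b /\ (l a b \/ a = b).
Proof. intros [H|[H|(a'&b&H&H'&Hl)]]; [discriminate| subst; eauto | injection H as ->; eauto]. Qed.
Lemma leL_ValVal {X} (l : X -> X -> Prop) (Hr : forall a, l a a) a b : leL l (Val a) (Val b) -> l a b.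
Proof. intros H; apply leL_Val in H as (b'&E&[H|H]); injection E as <-; subst; auto. Qed.
Lemma leL_ValVal' {X} (l : X -> X -> Prop) a b : l a b -> leL l (Val a) (Val b).
Proof. intros; right; right; eauto. Qed.

End Dom.

Section Lub.
Variable X : Type.
Variable dm : X -> Prop.
Variable l : X -> X -> Prop.
Hypothesis Hrefl : forall a, l a a.
Hypothesis Htrans : forall a b c, l a b -> l b c -> l a c.

Lemma chain_mono c : chain dm l c -> forall k k', k <= k' -> l (c k) (c k').
Proof.
  intros [_ Hc] k k' H. induction H. apply Hrefl. eapply Htrans; eauto.
Qed.

Lemma lub_unique c x y : is_lub dm l c x -> is_lub dm l c y -> l x y /\ l y x.
Proof. intros (Hx&Hx1&Hx2) (Hy&Hy1&Hy2). split; auto. Qed.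

Lemma lub_equiv c x y : is_lub dm l c x -> dm y -> l x y -> l y x -> is_lub dm l c y.
Proof.
  intros (Hx&Hx1&Hx2) Hy H1 H2. split; [auto|split].
  - intros k; eauto.
  - intros z Hz Hz'. eauto.
Qed.

Lemma lub_const x : dm x -> is_lub dm l (fun _ => x) x.
Proof. intros Hx. split; [auto|split]; auto. intros; apply (H0 0). Qed.

Lemma chain_shift c m : chain dm l c -> chain dm l (fun j => c (m + j)).
Proof. intros [H1 H2]; split; intros k; auto. rewrite Nat.add_succ_r. apply H2. Qed.

Lemma lub_shift c m x : chain dm l c -> is_lub dm l (fun j => c (m + j)) x -> is_lub dm l c x.
Proof.
  intros Hc (Hx&Hx1&Hx2). split; [auto|split].
  - intros k. eapply Htrans; [|apply (Hx1 k)]. apply (chain_mono c Hc). lia.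
  - intros z Hz Hz'. apply Hx2; auto.
Qed.

Lemma lub_shift' c m x : chain dm l c -> is_lub dm l c x -> is_lub dm l (fun j => c (m + j)) x.
Proof.
  intros Hc (Hx&Hx1&Hx2). split; [auto|split].
  - intros k. apply Hx1.
  - intros z Hz Hz'. apply Hx2; auto. intros k.
    eapply Htrans; [|apply (Hz' k)]. apply (chain_mono c Hc). lia.
Qed.

End Lub.

Section LubL.
Variable X : Type.
Variable dm : X -> Prop.
Variable l : X -> X -> Prop.
Hypothesis Hrefl : forall a, l a a.
Hypothesis Htrans : forall a b c, l a b -> l b c -> l a c.

Lemma leL_refl' u : leL l u u.  Proof. apply leL_refl. Qed.
Lemma leL_trans' u v w : leL l u v -> leL l v w -> leL l u w.
Proof. apply leL_trans; auto. Qed.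

Hypothesis Hlub : forall c, chain dm l c -> exists x, is_lub dm l c x.

Definition vchain (c : nat -> lift X) (k0 : nat) (a : X) : nat -> X :=
  fun j => match c (k0 + j) with Val b => b | _ => a end.

Lemma lift_lub_cases c U : chain (domL dm) (leL l) c -> is_lub (domL dm) (leL l) c U ->
  (U = Bot /\ forall k, c k = Bot) \/
  (U = Star /\ exists k, c k = Star) \/
  (exists a k0 a0, U = Val a /\ c k0 = Val a0 /\ (forall k, c k <> Star) /\
     (forall j, c (k0 + j) = Val (vchain c k0 a0 j)) /\
     chain dm l (vchain c k0 a0) /\ is_lub dm l (vchain c k0 a0) a).
Proof.
  intros Hc HU.
  pose proof (@chain_mono _ (domL dm) (leL l) leL_refl' leL_trans' c Hc) as Hm.
  destruct (classic (exists k, c k = Star)) as [[k Hk]|Hns].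
  - right; left. split; [|eauto].
    destruct HU as (_&HU&_). specialize (HU k). rewrite Hk in HU. apply leL_Star in HU; auto.
  - destruct (classic (exists k a, c k = Val a)) as [(k0&a0&Hk0)|Hnv].
    + assert (Hv : forall j, c (k0 + j) = Val (vchain c k0 a0 j)).
      { intros j. unfold vchain. specialize (Hm k0 (k0 + j) ltac:(lia)). rewrite Hk0 in Hm.
        apply leL_Val in Hm as (b&->&_). reflexivity. }
      assert (Hvc : chain dm l (vchain c k0 a0)).
      { split.
        - intros j. destruct Hc as [Hd _]. specialize (Hd (k0 + j)). rewrite Hv in Hd.
          destruct Hd as [Hd|[Hd|(b&Hd&Hb)]]; try discriminate. injection Hd as ->; auto.
        - intros j. destruct Hc as [_ Hl]. specialize (Hl (k0 + j)).
          rewrite Hv, <- Nat.add_succ_r, Hv in Hl. apply leL_ValVal in Hl; auto. }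
      destruct (Hlub _ Hvc) as [x Hx].
      assert (HU' : is_lub (domL dm) (leL l) c (Val x)).
      { apply (@lub_shift _ (domL dm) (leL l) leL_refl' leL_trans' c k0); auto.
        destruct Hx as (Hx&Hx1&Hx2). split; [right;right;eauto|split].
        - intros j. rewrite Hv. apply leL_ValVal'; auto.
        - intros z Hz Hz'. pose proof (Hz' 0) as H0. simpl in H0. rewrite Hv in H0.
          apply leL_Val in H0 as (b&->&_). apply leL_ValVal'. apply Hx2.
          + destruct Hz as [Hz|[Hz|(b'&Hz&Hb)]]; try discriminate. injection Hz as ->; auto.
          + intros j. specialize (Hz' j). simpl in Hz'. rewrite Hv in Hz'. apply leL_ValVal in Hz'; auto. }
      destruct (@lub_unique _ (domL dm) (leL l) c U (Val x) HU HU') as [H1 H2].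
      apply leL_Val in H2 as (a&->&Hxa). right; right.
      exists a, k0, a0. split; auto. split; auto. split.
      { intros k Hk; apply Hns; eauto. }
      split; auto. split; auto.
      apply lub_equiv with x; auto.
      { destruct HU as [HUd _]. destruct HUd as [Hz|[Hz|(b'&Hz&Hb)]]; try discriminate. injection Hz as ->; auto. }
      { destruct Hxa as [H|H]; subst; auto. }
      { apply leL_ValVal in H1; auto. }
    + left. assert (Hb : forall k, c k = Bot).
      { intros k. destruct Hc as [Hd _]. destruct (Hd k) as [H|[H|(a&H&_)]]; auto.
        - exfalso; eauto.
        - exfalso; eauto. }
      split; auto. destruct HU as (_&_&HU). apply leL_Bot with l. apply HU.
      left; auto. intros k; rewrite Hb; apply leL_refl.
Qed.

Lemma lift_lub_exists c : chain (domL dm) (leL l) c -> exists U, is_lub (domL dm) (leL l) c U.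
Proof.
  intros Hc.
  pose proof (@chain_mono _ (domL dm) (leL l) leL_refl' leL_trans' c Hc) as Hm.
  destruct (classic (exists k, c k = Star)) as [[k Hk]|Hns].
  - exists Star. split; [right;left;auto|split].
    + intros k'. destruct (le_lt_dec k k') as [H|H].
      * specialize (Hm k k' H). rewrite Hk in Hm. apply leL_Star in Hm. rewrite Hm; apply leL_refl.
      * specialize (Hm k' k ltac:(lia)). rewrite Hk in Hm. auto.
    + intros z _ Hz. specialize (Hz k). rewrite Hk in Hz. apply leL_Star in Hz; subst; apply leL_refl.
  - destruct (classic (exists k a, c k = Val a)) as [(k0&a0&Hk0)|Hnv].
    + assert (Hv : forall j, c (k0 + j) = Val (vchain c k0 a0 j)).
      { intros j. unfold vchain. specialize (Hm k0 (k0 + j) ltac:(lia)). rewrite Hk0 in Hm.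
        apply leL_Val in Hm as (b&->&_). reflexivity. }
      assert (Hvc : chain dm l (vchain c k0 a0)).
      { split.
        - intros j. destruct Hc as [Hd _]. specialize (Hd (k0 + j)). rewrite Hv in Hd.
          destruct Hd as [Hd|[Hd|(b&Hd&Hb)]]; try discriminate. injection Hd as ->; auto.
        - intros j. destruct Hc as [_ Hl]. specialize (Hl (k0 + j)).
          rewrite Hv, <- Nat.add_succ_r, Hv in Hl. apply leL_ValVal in Hl; auto. }
      destruct (Hlub _ Hvc) as [x Hx]. exists (Val x).
      apply (@lub_shift _ (domL dm) (leL l) leL_refl' leL_trans' c k0); auto.
      destruct Hx as (Hx&Hx1&Hx2). split; [right;right;eauto|split].
      * intros j. rewrite Hv. apply leL_ValVal'; auto.
      * intros z Hz Hz'. pose proof (Hz' 0) as H0. simpl in H0. rewrite Hv in H0.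
        apply leL_Val in H0 as (b&->&_). apply leL_ValVal'. apply Hx2.
        -- destruct Hz as [Hz|[Hz|(b'&Hz&Hb)]]; try discriminate. injection Hz as ->; auto.
        -- intros j. specialize (Hz' j). simpl in Hz'. rewrite Hv in Hz'. apply leL_ValVal in Hz'; auto.
    + exists Bot. assert (Hb : forall k, c k = Bot).
      { intros k. destruct Hc as [Hd _]. destruct (Hd k) as [H|[H|(a&H&_)]]; auto.
        - exfalso; eauto.
        - exfalso; eauto. }
      split; [left; auto|split].
      * intros k; rewrite Hb; apply leL_refl.
      * intros z _ _. left; auto.
Qed.

End LubL.

Section TLub.
Variable Pv : Type.

Lemma dom_arr_app t1 t2 (f : sem Pv (TArr t1 t2)) P d :
  dom Pv (TArr t1 t2) f -> dom Pv t1 d -> domL (dom Pv t2) (f P d).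
Proof. intros Hf Hd. apply dom_arr in Hf. apply Hf; auto. Qed.

Lemma dom_arr_mono t1 t2 (f : sem Pv (TArr t1 t2)) P d d' :
  dom Pv (TArr t1 t2) f -> dom Pv t1 d -> dom Pv t1 d' -> le Pv t1 d d' -> leL (le Pv t2) (f P d) (f P d').
Proof. intros Hf. apply dom_arr in Hf. apply Hf; auto. Qed.

Lemma dom_arr_cont t1 t2 (f : sem Pv (TArr t1 t2)) P c x :
  dom Pv (TArr t1 t2) f -> chain (dom Pv t1) (le Pv t1) c -> is_lub (dom Pv t1) (le Pv t1) c x ->
  is_lub (domL (dom Pv t2)) (leL (le Pv t2)) (fun k => f P (c k)) (f P x).
Proof. intros Hf. apply dom_arr in Hf. apply Hf; auto. Qed.

Lemma pw_chain t1 t2 (f : nat -> sem Pv (TArr t1 t2)) P d :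
  chain (dom Pv (TArr t1 t2)) (le Pv (TArr t1 t2)) f -> dom Pv t1 d ->
  chain (domL (dom Pv t2)) (leL (le Pv t2)) (fun k => f k P d).
Proof.
  intros [H1 H2] Hd. split.
  - intros k. apply dom_arr_app; auto.
  - intros k. apply (H2 k); auto.
Qed.

Lemma arrow_lub_of_pw t1 t2 (f : nat -> sem Pv (TArr t1 t2)) F :
  dom Pv (TArr t1 t2) F ->
  (forall P d, dom Pv t1 d -> is_lub (domL (dom Pv t2)) (leL (le Pv t2)) (fun k => f k P d) (F P d)) ->
  is_lub (dom Pv (TArr t1 t2)) (le Pv (TArr t1 t2)) f F.
Proof.
  intros HF Hpw. split; [auto|split].
  - intros k. apply le_arr. intros P d Hd. apply (Hpw P d Hd).
  - intros g Hg Hub. apply le_arr. intros P d Hd. apply (Hpw P d Hd).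
    + apply dom_arr_app; auto.
    + intros k. apply (Hub k); auto.
Qed.

Lemma pw_construct t1 t2
  (IH2 : forall c, chain (dom Pv t2) (le Pv t2) c -> exists x, is_lub (dom Pv t2) (le Pv t2) c x)
  (c : nat -> sem Pv (TArr t1 t2)) :
  chain (dom Pv (TArr t1 t2)) (le Pv (TArr t1 t2)) c ->
  exists F, dom Pv (TArr t1 t2) F /\
   forall P d, dom Pv t1 d -> is_lub (domL (dom Pv t2)) (leL (le Pv t2)) (fun k => c k P d) (F P d).
Proof.
  intros Hc.
    pose (F := (fun P d => epsilon (inhabits Bot)
                  (fun u => dom Pv t1 d -> is_lub (domL (dom Pv t2)) (leL (le Pv t2)) (fun k => c k P d) u))
                : sem Pv (TArr t1 t2)).
    assert (HF : forall P d, dom Pv t1 d -> is_lub (domL (dom Pv t2)) (leL (le Pv t2)) (fun k => c k P d) (F P d)).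
    { intros P d Hd. unfold F.
      apply (epsilon_spec (inhabits Bot) (fun u => dom Pv t1 d -> is_lub (domL (dom Pv t2)) (leL (le Pv t2)) (fun k => c k P d) u)); auto.
      destruct (lift_lub_exists (sem Pv t2) (dom Pv t2) (le Pv t2) (le_refl Pv t2) (le_trans Pv t2) IH2 (fun k => c k P d)) as [u Hu].
      apply pw_chain; auto. exists u; auto. }
    exists F. split; auto.
    apply dom_arr. split; [|split].
    + intros P d Hd. apply (HF P d Hd).
    + intros P d d' Hd Hd' Hdd. apply (HF P d Hd).
      * apply (HF P d' Hd').
      * intros k. apply leL_trans with (c k P d'). apply le_trans.
        apply dom_arr_mono; auto. apply (proj1 Hc k).
        exact (proj1 (proj2 (HF P d' Hd')) k).
    + intros P e y He Hy. split; [apply (HF P y); apply Hy|split].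
      * intros j. apply (HF P (e j) (proj1 He j)).
        { apply (HF P y); apply Hy. }
        intros k. apply leL_trans with (c k P y). apply le_trans.
        apply dom_arr_mono; auto. apply (proj1 Hc k). apply He. apply Hy. apply Hy.
        exact (proj1 (proj2 (HF P y (proj1 Hy))) k).
      * intros z Hz Hzub. apply (HF P y (proj1 Hy)); auto.
        intros k. pose proof (dom_arr_cont _ _ (c k) P e y (proj1 Hc k) He Hy) as Hck.
        apply Hck; auto.
        intros j. apply leL_trans with (F P (e j)). apply le_trans. 2: apply (Hzub j).
        exact (proj1 (proj2 (HF P (e j) (proj1 He j))) k).
Qed.

Lemma lub_exists t : forall c, chain (dom Pv t) (le Pv t) c -> exists x, is_lub (dom Pv t) (le Pv t) c x.
Proof.
  induction t as [|t1 IH1 t2 IH2]; intros c Hc.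
  - exists (c 0). split; [exact I|split].
    + intros k. apply le_bool. induction k. reflexivity. rewrite <- IHk. symmetry. apply (proj2 Hc k).
    + intros y _ Hy. apply (Hy 0).
  - destruct (pw_construct t1 t2 IH2 c Hc) as (F&HFd&HF).
    exists F. apply arrow_lub_of_pw; auto.
Qed.

Lemma pw_of_arrow_lub t1 t2 (f : nat -> sem Pv (TArr t1 t2)) F :
  chain (dom Pv (TArr t1 t2)) (le Pv (TArr t1 t2)) f ->
  is_lub (dom Pv (TArr t1 t2)) (le Pv (TArr t1 t2)) f F ->
  forall P d, dom Pv t1 d -> is_lub (domL (dom Pv t2)) (leL (le Pv t2)) (fun k => f k P d) (F P d).
Proof.
  intros Hc HF P d Hd.
  destruct (pw_construct t1 t2 (lub_exists t2) f Hc) as (G&HGd&HG).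
  pose proof (arrow_lub_of_pw _ _ f G HGd HG) as HG'.
  destruct (lub_unique _ _ _ f F G HF HG') as [H1 H2].
  apply (lub_equiv _ (domL (dom Pv t2)) (leL (le Pv t2)) (leL_refl _) (leL_trans _ (le_trans Pv t2)) _ (G P d)).
  - apply HG; auto.
  - apply dom_arr_app; auto. apply HF.
  - apply H2; auto.
  - apply H1; auto.
Qed.

Lemma lift_lub_exists_t t c : chain (domL (dom Pv t)) (leL (le Pv t)) c ->
  exists u, is_lub (domL (dom Pv t)) (leL (le Pv t)) c u.
Proof. apply lift_lub_exists. apply le_refl. apply le_trans. apply lub_exists. Qed.

Lemma lift_lub_cases_t t c U : chain (domL (dom Pv t)) (leL (le Pv t)) c -> is_lub (domL (dom Pv t)) (leL (le Pv t)) c U ->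
  (U = Bot /\ forall k, c k = Bot) \/
  (U = Star /\ exists k, c k = Star) \/
  (exists a k0 a0, U = Val a /\ c k0 = Val a0 /\ (forall k, c k <> Star) /\
     (forall j, c (k0 + j) = Val (vchain _ c k0 a0 j)) /\
     chain (dom Pv t) (le Pv t) (vchain _ c k0 a0) /\ is_lub (dom Pv t) (le Pv t) (vchain _ c k0 a0) a).
Proof. apply lift_lub_cases. apply le_refl. apply le_trans. apply lub_exists. Qed.

End TLub.

Section Env.
Variable Pv : Type.

Lemma lub_Val t c x : is_lub (dom Pv t) (le Pv t) c x ->
  is_lub (domL (dom Pv t)) (leL (le Pv t)) (fun k => Val (c k)) (Val x).
Proof.
  intros (Hx&Hx1&Hx2). split; [right;right;eauto|split].
  - intros k. apply leL_ValVal'; auto.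
  - intros z Hz Hz'. pose proof (Hz' 0) as H0. simpl in H0.
    apply leL_Val in H0 as (b&->&_). apply leL_ValVal'. apply Hx2.
    + destruct Hz as [Hz|[Hz|(b'&Hz&Hb)]]; try discriminate. injection Hz as ->; auto.
    + intros j. specialize (Hz' j). simpl in Hz'. apply leL_ValVal in Hz'; auto. apply le_refl.
Qed.

Lemma lub_Star t (c : nat -> lift (sem Pv t)) k : chain (domL (dom Pv t)) (leL (le Pv t)) c -> c k = Star ->
  is_lub (domL (dom Pv t)) (leL (le Pv t)) c Star.
Proof.
  intros Hc Hk. destruct (lift_lub_exists_t Pv t c Hc) as [u Hu].
  destruct (lift_lub_cases_t Pv t c u Hc Hu) as [(->&Hb)|[(->&_)|(a&k0&a0&->&_&Hns&_)]].
  - rewrite Hb in Hk; discriminate.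
  - auto.
  - exfalso; eapply Hns; eauto.
Qed.

Lemma lub_Bot t : is_lub (domL (dom Pv t)) (leL (le Pv t)) (fun _ => Bot) Bot.
Proof. apply lub_const. apply leL_refl. left; auto. Qed.

Definition envP {D : ctx} (h : env Pv D) : Prop :=
  forall y, match D y as o return envty Pv o -> Prop with
            | Some t => dom Pv t | None => fun _ => True end (h y).
Definition envLe {D : ctx} (h h' : env Pv D) : Prop :=
  forall y, match D y as o return envty Pv o -> envty Pv o -> Prop with
            | Some t => le Pv t | None => fun _ _ => True end (h y) (h' y).
Definition envLub {D : ctx} (hc : nat -> env Pv D) (h : env Pv D) : Prop :=
  forall y, match D y as o return (nat -> envty Pv o) -> envty Pv o -> Prop with
            | Some t => fun c x => is_lub (dom Pv t) (le Pv t) c x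
            | None => fun _ _ => True end (fun k => hc k y) (h y).
Definition envChain {D : ctx} (hc : nat -> env Pv D) : Prop :=
  (forall k, envP (hc k)) /\ (forall k, envLe (hc k) (hc (S k))).

Lemma lookup_P {D : ctx} (h : env Pv D) x t (Hx : D x = Some t) : envP h -> dom Pv t (lookup h Hx).
Proof.
  intros H. specialize (H x). unfold lookup. revert H. generalize (h x).
  rewrite Hx. auto.
Qed.

Lemma lookup_Le {D : ctx} (h h' : env Pv D) x t (Hx : D x = Some t) : envLe h h' -> le Pv t (lookup h Hx) (lookup h' Hx).
Proof.
  intros H. specialize (H x). unfold lookup. revert H. generalize (h x) (h' x).
  rewrite Hx. auto.
Qed.

Lemma lookup_Lub_aux (o : option ty) t (Ho : o = Some t) (c : nat -> envty Pv o) (x : envty Pv o) :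
  match o as o return (nat -> envty Pv o) -> envty Pv o -> Prop with
  | Some t => fun c x => is_lub (dom Pv t) (le Pv t) c x
  | None => fun _ _ => True end c x ->
  is_lub (dom Pv t) (le Pv t) (fun k => match Ho in _ = o return envty Pv o with eq_refl => c k end)
    (match Ho in _ = o return envty Pv o with eq_refl => x end).
Proof. subst o. auto. Qed.

Lemma lookup_Lub {D : ctx} (hc : nat -> env Pv D) h x t (Hx : D x = Some t) : envLub hc h ->
  is_lub (dom Pv t) (le Pv t) (fun k => lookup (hc k) Hx) (lookup h Hx).
Proof.
  intros H. specialize (H x). unfold lookup.
  exact (lookup_Lub_aux (D x) t Hx (fun k => hc k x) (h x) H).
Qed.

Lemma upd_P {D : ctx} (h : env Pv D) x t v : envP h -> dom Pv t v -> envP (upd h x t v).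
Proof.
  intros H Hv y. specialize (H y). unfold upd, ext. destruct (Nat.eqb y x); auto.
Qed.

Lemma upd_Le {D : ctx} (h h' : env Pv D) x t v v' : envLe h h' -> le Pv t v v' -> envLe (upd h x t v) (upd h' x t v').
Proof.
  intros H Hv y. specialize (H y). unfold upd, ext. destruct (Nat.eqb y x); auto.
Qed.

Lemma upd_Lub {D : ctx} (hc : nat -> env Pv D) h x t (c : nat -> sem Pv t) v :
  envLub hc h -> is_lub (dom Pv t) (le Pv t) c v ->
  envLub (fun k => upd (hc k) x t (c k)) (upd h x t v).
Proof.
  intros H Hv y. specialize (H y). unfold upd, ext. destruct (Nat.eqb y x); auto.
Qed.

Lemma envLe_refl {D : ctx} (h : env Pv D) : envLe h h.
Proof. intros y. generalize (h y). destruct (D y); intros; auto. apply le_refl. Qed.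

Lemma envLe_trans {D : ctx} (h1 h2 h3 : env Pv D) : envLe h1 h2 -> envLe h2 h3 -> envLe h1 h3.
Proof.
  intros H1 H2 y. specialize (H1 y). specialize (H2 y). revert H1 H2.
  generalize (h1 y) (h2 y) (h3 y). destruct (D y); auto. apply le_trans.
Qed.

Lemma envLub_const {D : ctx} (h : env Pv D) : envP h -> envLub (fun _ => h) h.
Proof.
  intros H y. specialize (H y). revert H. generalize (h y). destruct (D y); auto.
  intros; apply lub_const; auto. apply le_refl.
Qed.

Lemma envLub_P {D : ctx} (hc : nat -> env Pv D) h : envLub hc h -> envP h.
Proof.
  intros H y. specialize (H y). revert H. generalize (fun k => hc k y) (h y). destruct (D y); auto.
  intros c x Hx; apply Hx.
Qed.

Lemma envLub_ub {D : ctx} (hc : nat -> env Pv D) h k : envLub hc h -> envLe (hc k) h.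
Proof.
  intros H y. specialize (H y). revert H. generalize (fun k => hc k y) (h y) (hc k y).
Abort.

Lemma envLub_ub {D : ctx} (hc : nat -> env Pv D) h k : envLub hc h -> envLe (hc k) h.
Proof.
  intros H y. specialize (H y). unfold envLub in H.
  change (hc k y) with ((fun k => hc k y) k). revert H. generalize (fun k => hc k y) (h y).
  destruct (D y); auto. intros c x Hx. apply Hx.
Qed.

Lemma envChain_mono {D : ctx} (hc : nat -> env Pv D) : envChain hc -> forall k k', k <= k' -> envLe (hc k) (hc k').
Proof.
  intros [_ Hc] k k' H. induction H. apply envLe_refl. eapply envLe_trans; eauto.
Qed.

Lemma envChain_shift {D : ctx} (hc : nat -> env Pv D) m : envChain hc -> envChain (fun j => hc (m + j)).
Proof. intros [H1 H2]; split; intros k; auto. rewrite Nat.add_succ_r. apply H2. Qed.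

Lemma envLub_shift_aux (o : option ty) (c : nat -> envty Pv o) x m :
  match o as o return (nat -> envty Pv o) -> envty Pv o -> Prop with
  | Some t => fun c x => is_lub (dom Pv t) (le Pv t) c x
  | None => fun _ _ => True end c x ->
  (forall k, match o as o return envty Pv o -> envty Pv o -> Prop with
            | Some t => le Pv t | None => fun _ _ => True end (c k) (c (S k))) ->
  (forall k, match o as o return envty Pv o -> Prop with
            | Some t => dom Pv t | None => fun _ => True end (c k)) ->
  match o as o return (nat -> envty Pv o) -> envty Pv o -> Prop with
  | Some t => fun c x => is_lub (dom Pv t) (le Pv t) c x
  | None => fun _ _ => True end (fun j => c (m + j)) x.
Proof.
  destruct o; auto. intros Hx Hl Hd. apply lub_shift'; auto. apply le_refl. apply le_trans.
  split; auto.
Qed.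

Lemma envLub_shift {D : ctx} (hc : nat -> env Pv D) h m : envChain hc -> envLub hc h -> envLub (fun j => hc (m + j)) h.
Proof.
  intros Hc H y. exact (envLub_shift_aux (D y) (fun k => hc k y) (h y) m (H y)
     (fun k => proj2 Hc k y) (fun k => proj1 Hc k y)).
Qed.

Lemma envChain_upd {D : ctx} (hc : nat -> env Pv D) x t (c : nat -> sem Pv t) :
  envChain hc -> chain (dom Pv t) (le Pv t) c -> envChain (fun k => upd (hc k) x t (c k)).
Proof.
  intros [H1 H2] [C1 C2]. split; intros k. apply upd_P; auto. apply upd_Le; auto.
Qed.

Lemma envChain_const {D : ctx} (h : env Pv D) : envP h -> envChain (fun _ => h).
Proof. intros H; split; intros; auto. apply envLe_refl. Qed.

End Env.

Section LFP.
Variable Pv : Type.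
Variables t1 t2 : ty.
Notation T := (TArr t1 t2).

Definition botf : sem Pv T := fun _ _ => Bot.

Lemma botf_dom : dom Pv T botf.
Proof.
  apply dom_arr. split; [|split].
  - intros; left; auto.
  - intros; apply leL_refl.
  - intros. apply (lub_Bot Pv t2).
Qed.

Lemma botf_le g : le Pv T botf g.
Proof. apply le_arr. intros; left; auto. Qed.

Variable G : sem Pv T -> sem Pv T.
Hypothesis Gdom : forall g, dom Pv T g -> dom Pv T (G g).
Hypothesis Gmono : forall g g', dom Pv T g -> dom Pv T g' -> le Pv T g g' -> le Pv T (G g) (G g').
Hypothesis Gcont : forall c x, chain (dom Pv T) (le Pv T) c -> is_lub (dom Pv T) (le Pv T) c x ->
   is_lub (dom Pv T) (le Pv T) (fun k => G (c k)) (G x).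

Definition kl k := Nat.iter k G botf.

Lemma kl_dom k : dom Pv T (kl k).
Proof. induction k; simpl. apply botf_dom. apply Gdom; auto. Qed.

Lemma kl_chain : chain (dom Pv T) (le Pv T) kl.
Proof.
  split. apply kl_dom. intros k; induction k. apply botf_le.
  change (le Pv T (G (kl k)) (G (kl (S k)))). apply Gmono; auto; apply kl_dom.
Qed.

Lemma kl_below y : dom Pv T y -> le Pv T (G y) y -> forall k, le Pv T (kl k) y.
Proof.
  intros Hy HG k. induction k. apply botf_le. simpl.
  eapply le_trans; [|apply HG]. apply Gmono; auto. apply kl_dom.
Qed.

Lemma lfp_props :
  let L := lfp (dom Pv T) (le Pv T) G botf in
  dom Pv T L /\ is_lub (dom Pv T) (le Pv T) kl L /\ le Pv T (G L) L /\
  (forall y, dom Pv T y -> le Pv T (G y) y -> le Pv T L y).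
Proof.
  intros L.
  destruct (lub_exists Pv T kl kl_chain) as [x Hx].
  assert (HGx : is_lub (dom Pv T) (le Pv T) (fun k => kl (S k)) (G x)).
  { apply (Gcont kl x kl_chain Hx). }
  assert (Hxd : dom Pv T x) by apply Hx.
  assert (H1 : le Pv T x (G x)).
  { apply Hx. apply Gdom; auto. intros k. destruct k. apply botf_le. apply HGx. }
  assert (H2 : le Pv T (G x) x).
  { apply HGx; auto. intros k. apply Hx. }
  assert (Hxy : forall y, dom Pv T y -> le Pv T (G y) y -> le Pv T x y).
  { intros y Hy HGy. apply Hx; auto. apply kl_below; auto. }
  assert (HL : dom Pv T L /\ le Pv T (G L) L /\ le Pv T L (G L) /\
       forall g', dom Pv T g' -> le Pv T (G g') g' -> le Pv T g' (G g') -> le Pv T L g').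
  { unfold L, lfp. apply (epsilon_spec (inhabits botf)
      (fun g => dom Pv T g /\ le Pv T (G g) g /\ le Pv T g (G g) /\
         forall g', dom Pv T g' -> le Pv T (G g') g' -> le Pv T g' (G g') -> le Pv T g g')).
    exists x. split; auto. }
  destruct HL as (HLd & HL1 & HL2 & HL3).
  assert (HLx : le Pv T L x) by (apply HL3; auto).
  assert (HxL : le Pv T x L) by (apply Hxy; auto).
  split; auto. split; [|split; auto].
  - apply (lub_equiv _ _ _ (le_refl Pv T) (le_trans Pv T) kl x L); auto.
  - intros y Hy HGy. eapply le_trans; eauto.
Qed.

End LFP.

Section Help.
Variable Pv : Type.

Lemma is_lub_ext {X} (dm : X -> Prop) (l : X -> X -> Prop) c c' x :
  (forall k, c k = c' k) -> is_lub dm l c x -> is_lub dm l c' x.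
Proof. intros E (H1&H2&H3). split; [auto|split]. intros k; rewrite <- E; auto. intros z Hz Hz'. apply H3; auto. intros k; rewrite E; auto. Qed.

Lemma domL_Val_inv t a : domL (dom Pv t) (Val a) -> dom Pv t a.
Proof. intros [H|[H|(b&H&Hb)]]; try discriminate. injection H as ->; auto. Qed.

Lemma diag t1 t2 (f : nat -> sem Pv (TArr t1 t2)) F (v : nat -> sem Pv t1) V P :
  chain (dom Pv (TArr t1 t2)) (le Pv (TArr t1 t2)) f -> is_lub (dom Pv (TArr t1 t2)) (le Pv (TArr t1 t2)) f F ->
  chain (dom Pv t1) (le Pv t1) v -> is_lub (dom Pv t1) (le Pv t1) v V ->
  is_lub (domL (dom Pv t2)) (leL (le Pv t2)) (fun j => f j P (v j)) (F P V).
Proof.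
  intros Hf HF Hv HV.
  assert (HFd : dom Pv (TArr t1 t2) F) by apply HF.
  assert (HVd : dom Pv t1 V) by apply HV.
  split; [|split].
  - apply dom_arr_app; auto.
  - intros j. apply leL_trans with (F P (v j)). apply le_trans.
    + destruct HF as (_&HF&_). apply (HF j). apply Hv.
    + apply dom_arr_mono; auto. apply Hv. apply HV.
  - intros z Hz Hub.
    pose proof (dom_arr_cont _ _ _ F P v V HFd Hv HV) as HC.
    apply HC; auto. intros j.
    pose proof (pw_of_arrow_lub _ _ _ f F Hf HF P (v j) (proj1 Hv j)) as HP.
    apply HP; auto. intros k.
    pose (m := max k j).
    apply leL_trans with (f m P (v j)). apply le_trans.
    + apply (chain_mono _ _ _ (le_refl Pv _) (le_trans Pv _) f Hf k m). lia. apply Hv.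
    + apply leL_trans with (f m P (v m)). apply le_trans.
      * apply dom_arr_mono. apply Hf. apply Hv. apply Hv.
        apply (chain_mono _ _ _ (le_refl Pv _) (le_trans Pv _) v Hv j m). lia.
      * apply (Hub m).
Qed.

Definition appL {t1 t2} (P : pset Pv) (u1 : lift (sem Pv (TArr t1 t2))) (u2 : lift (sem Pv t1)) : lift (sem Pv t2) :=
  bindL u1 (fun f : sem Pv (TArr t1 t2) => bindL u2 (fun v => f P v)).

Lemma appL_dom t1 t2 P u1 u2 : domL (dom Pv (TArr t1 t2)) u1 -> domL (dom Pv t1) u2 -> domL (dom Pv t2) (appL P u1 u2).
Proof.
  intros H1 H2. destruct u1 as [| |f]; simpl; [left|right;left|]; auto.
  destruct u2 as [| |v]; simpl; [left|right;left|]; auto.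
  apply dom_arr_app; apply domL_Val_inv; auto.
Qed.

Lemma appL_mono t1 t2 P u1 u1' u2 u2' :
  domL (dom Pv (TArr t1 t2)) u1 -> domL (dom Pv t1) u2 ->
  domL (dom Pv (TArr t1 t2)) u1' -> domL (dom Pv t1) u2' ->
  leL (le Pv (TArr t1 t2)) u1 u1' -> leL (le Pv t1) u2 u2' ->
  leL (le Pv t2) (appL P u1 u2) (appL P u1' u2').
Proof.
  intros D1 D2 D1' D2' L1 L2.
  destruct u1 as [| |f].
  - left; auto.
  - apply leL_Star in L1; subst; apply leL_refl.
  - apply leL_Val in L1 as (f'&->&Hf). apply domL_Val_inv in D1. apply domL_Val_inv in D1'.
    destruct u2 as [| |v].
    + left; auto.
    + apply leL_Star in L2; subst. simpl. apply leL_refl.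
    + apply leL_Val in L2 as (v'&->&Hv). apply domL_Val_inv in D2. apply domL_Val_inv in D2'. simpl.
      assert (Hv' : le Pv t1 v v') by (destruct Hv; subst; auto using le_refl).
      assert (Hf' : le Pv (TArr t1 t2) f f') by (destruct Hf; subst; auto using le_refl).
      apply leL_trans with (f P v'). apply le_trans.
      * apply dom_arr_mono; auto.
      * apply Hf'; auto.
Qed.

Lemma chain_lift_Star t (c : nat -> lift (sem Pv t)) k k' :
  chain (domL (dom Pv t)) (leL (le Pv t)) c -> k <= k' -> c k = Star -> c k' = Star.
Proof.
  intros Hc Hk E. pose proof (chain_mono _ _ _ (leL_refl _) (leL_trans _ (le_trans Pv t)) c Hc k k' Hk) as H.
  rewrite E in H. apply leL_Star in H; auto.
Qed.

Lemma appL_cont t1 t2 P c1 U1 c2 U2 :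
  chain (domL (dom Pv (TArr t1 t2))) (leL (le Pv (TArr t1 t2))) c1 ->
  is_lub (domL (dom Pv (TArr t1 t2))) (leL (le Pv (TArr t1 t2))) c1 U1 ->
  chain (domL (dom Pv t1)) (leL (le Pv t1)) c2 ->
  is_lub (domL (dom Pv t1)) (leL (le Pv t1)) c2 U2 ->
  is_lub (domL (dom Pv t2)) (leL (le Pv t2)) (fun k => appL P (c1 k) (c2 k)) (appL P U1 U2).
Proof.
  intros H1 HU1 H2 HU2.
  assert (Hr : chain (domL (dom Pv t2)) (leL (le Pv t2)) (fun k => appL P (c1 k) (c2 k))).
  { split; intros k. apply appL_dom. apply H1. apply H2. apply appL_mono; try apply H1; try apply H2. }
  destruct (lift_lub_cases_t Pv _ c1 U1 H1 HU1) as [(->&Hb)|[(->&[k Hk])|(F&k0&f0&->&Hk0&Hns&Hv&Hvc&HF)]].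
  - eapply is_lub_ext; [|apply (lub_Bot Pv t2)]. intros k; rewrite Hb; reflexivity.
  - apply lub_Star with k; auto. simpl. unfold appL; rewrite Hk; reflexivity.
  - destruct (lift_lub_cases_t Pv _ c2 U2 H2 HU2) as [(->&Hb)|[(->&[k Hk])|(V&k1&v0&->&Hk1&Hns2&Hv2&Hvc2&HV)]].
    + eapply is_lub_ext; [|apply (lub_Bot Pv t2)]. intros k; unfold appL; rewrite Hb.
      destruct (c1 k) eqn:E; auto. exfalso; eapply Hns; eauto.
    + apply lub_Star with (k0 + k); auto. simpl. unfold appL.
      rewrite (Hv k). rewrite (chain_lift_Star _ c2 k (k0 + k)); auto. lia.
    + simpl. apply (lub_shift _ _ _ (leL_refl _) (leL_trans _ (le_trans Pv t2)) _ (k0 + k1)); auto.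
      eapply is_lub_ext; [|apply (diag t1 t2 (fun j => vchain _ c1 k0 f0 (k1 + j)) F (fun j => vchain _ c2 k1 v0 (k0 + j)) V P)].
      * intros j. simpl. unfold appL.
        replace (k0 + k1 + j) with (k0 + (k1 + j)) by lia. rewrite Hv.
        replace (k0 + (k1 + j)) with (k1 + (k0 + j)) by lia. rewrite Hv2. reflexivity.
      * apply chain_shift; auto.
      * apply lub_shift'; auto. apply le_refl. apply le_trans.
      * apply chain_shift; auto.
      * apply lub_shift'; auto. apply le_refl. apply le_trans.
Qed.

End Help.

Section Good.
Variables Pr Pv : Type.
Variable A : Pr -> pset Pv.

Definition Good {D e t} (d : @has_type Pr Pv D e t) : Prop :=
  (forall n P (h : env Pv D), envP Pv h -> domL (dom Pv t) (den A d n P h)) /\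
  (forall n P (h h' : env Pv D), envP Pv h -> envP Pv h' -> envLe Pv h h' ->
     leL (le Pv t) (den A d n P h) (den A d n P h')) /\
  (forall n P (hc : nat -> env Pv D) h, envChain Pv hc -> envLub Pv hc h ->
     is_lub (domL (dom Pv t)) (leL (le Pv t)) (fun k => den A d n P (hc k)) (den A d n P h)).

Lemma good_chain {D e t} (d : @has_type Pr Pv D e t) n P hc :
  Good d -> envChain Pv hc -> chain (domL (dom Pv t)) (leL (le Pv t)) (fun k => den A d n P (hc k)).
Proof.
  intros (G1&G2&_) [H1 H2]. split; intros k. apply G1; auto. apply G2; auto.
Qed.

Lemma good_all {D e t} (d : @has_type Pr Pv D e t) : Good d.
Proof.
  induction d.
  -
    split; [|split]; intros; cbn [den].
    + right; right; exists true; split; auto. exact I.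
    + apply leL_refl.
    + apply lub_const. apply leL_refl. right; right; exists true; split; auto. exact I.
  -
    split; [|split]; intros; cbn [den].
    + right; right; eexists; split; eauto. apply lookup_P; auto.
    + apply leL_ValVal'. apply lookup_Le; auto.
    + apply lub_Val. apply lookup_Lub; auto.
  -
    destruct IHd1 as (G1&G2&G3). destruct IHd2 as (G1'&G2'&G3'). destruct IHd3 as (G1''&G2''&G3'').
    assert (Dm : forall n P (h : env Pv D), envP Pv h ->
      domL (dom Pv t) (bindL (den A d1 n P h) (fun b : bool => if b then den A d2 n P h else den A d3 n P h))).
    { intros n P h Hh. destruct (den A d1 n P h) as [| |b]; simpl. left; auto. right; left; auto.
      destruct b; auto. }
    assert (Mn : forall n P (h h' : env Pv D), envP Pv h -> envP Pv h' -> envLe Pv h h' ->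
      leL (le Pv t) (bindL (den A d1 n P h) (fun b : bool => if b then den A d2 n P h else den A d3 n P h))
                    (bindL (den A d1 n P h') (fun b : bool => if b then den A d2 n P h' else den A d3 n P h'))).
    { intros n P h h' Hh Hh' Hhh. pose proof (G2 n P h h' Hh Hh' Hhh) as L.
      destruct (den A d1 n P h) as [| |b].
      - left; auto.
      - apply leL_Star in L. rewrite L. apply leL_refl.
      - apply leL_Val in L as (b'&->&Hb). assert (b = b') as <- by (destruct Hb; auto).
        simpl. destruct b; auto. }
    split; [|split]; cbn [den]; auto.
    intros n P hc h Hc Hl.
    assert (Hr : chain (domL (dom Pv t)) (leL (le Pv t))
      (fun k => bindL (den A d1 n P (hc k)) (fun b : bool => if b then den A d2 n P (hc k) else den A d3 n P (hc k)))).
    { split; intros k. apply Dm, Hc. apply Mn; apply Hc. }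
    pose proof (good_chain d1 n P hc (conj G1 (conj G2 G3)) Hc) as Hc1.
    destruct (lift_lub_cases_t Pv _ _ _ Hc1 (G3 n P hc h Hc Hl)) as [(E&Hb)|[(E&[k Hk])|(b&k0&b0&E&Hk0&Hns&Hv&Hvc&HB)]];
      rewrite E.
    + eapply is_lub_ext; [|apply (lub_Bot Pv t)]. intros k; simpl; rewrite Hb; reflexivity.
    + apply lub_Star with k; auto. simpl. rewrite Hk; reflexivity.
    + simpl. apply (lub_shift _ _ _ (leL_refl _) (leL_trans _ (le_trans Pv t)) _ k0); auto.
      assert (Hb : forall j, vchain _ (fun k => den A d1 n P (hc k)) k0 b0 j = b).
      { intros j. destruct HB as (_&HB&_). apply (HB j). }
      destruct b.
      * eapply is_lub_ext; [|apply (G3' n P (fun j => hc (k0 + j)) h); auto using envChain_shift, envLub_shift].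
        intros j. simpl. rewrite Hv, Hb. reflexivity.
      * eapply is_lub_ext; [|apply (G3'' n P (fun j => hc (k0 + j)) h); auto using envChain_shift, envLub_shift].
        intros j. simpl. rewrite Hv, Hb. reflexivity.
  -
    destruct IHd as (G1&G2&G3).
    assert (Fd : forall n (h : env Pv D), envP Pv h ->
      dom Pv (TArr t1 t2) (fun P' v => den A d n P' (upd h x t1 v))).
    { intros n h Hh. apply dom_arr. split; [|split].
      - intros P v Hv. apply G1. apply upd_P; auto.
      - intros P v v' Hv Hv' Hvv. apply G2; try apply upd_P; auto. apply upd_Le; auto. apply envLe_refl.
      - intros P c v Hc Hv. apply (G3 n P (fun k => upd h x t1 (c k))).
        + apply envChain_upd; auto. apply envChain_const; auto.
        + apply upd_Lub; auto. apply envLub_const; auto. }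
    split; [|split]; intros; cbn [den].
    + right; right; eexists; split; eauto.
    + apply leL_ValVal'. apply le_arr. intros P' v Hv. apply G2; try apply upd_P; auto. apply upd_Le; auto. apply le_refl.
    + apply lub_Val. apply arrow_lub_of_pw. apply Fd. eapply envLub_P; eauto.
      intros P' v Hv. apply (G3 n P' (fun k => upd (hc k) x t1 v)).
      * apply envChain_upd; auto. split; intros; auto. apply le_refl.
      * apply upd_Lub; auto. apply lub_const; auto. apply le_refl.
  -
    destruct IHd1 as (G1&G2&G3). destruct IHd2 as (G1'&G2'&G3').
    split; [|split]; intros; cbn [den].
    + change (domL (dom Pv t2) (appL Pv P (den A d1 n P h) (den A d2 n P h))). apply appL_dom; auto.
    + change (leL (le Pv t2) (appL Pv P (den A d1 n P h) (den A d2 n P h)) (appL Pv P (den A d1 n P h') (den A d2 n P h'))).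
      apply appL_mono; auto.
    + change (is_lub (domL (dom Pv t2)) (leL (le Pv t2)) (fun k => appL Pv P (den A d1 n P (hc k)) (den A d2 n P (hc k)))
         (appL Pv P (den A d1 n P h) (den A d2 n P h))).
      apply appL_cont; auto.
      * apply good_chain; auto. split; auto.
      * apply good_chain; auto. split; auto.
  -
    destruct IHd1 as (G1&G2&G3). destruct IHd2 as (G1'&G2'&G3').
    set (T := TArr t1 t2) in *.
    pose (Gh := fun n (h : env Pv D) (g : sem Pv T) =>
      ((fun P' v => den A d1 n P' (upd (upd h f T g) x t1 v)) : sem Pv T)).
    assert (GD : forall n h g, envP Pv h -> dom Pv T g -> dom Pv T (Gh n h g)).
    { intros n h g Hh Hg. apply dom_arr. split; [|split].
      - intros P v Hv. apply G1. apply upd_P; auto. apply upd_P; auto.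
      - intros P v v' Hv Hv' Hvv. apply G2; try (apply upd_P; auto; apply upd_P; auto).
        apply upd_Le; auto. apply envLe_refl.
      - intros P c v Hc Hv. apply (G3 n P (fun k => upd (upd h f T g) x t1 (c k))).
        + apply envChain_upd; auto. apply envChain_const; auto. apply upd_P; auto.
        + apply upd_Lub; auto. apply envLub_const; auto. apply upd_P; auto. }
    assert (GM : forall n h h' g g', envP Pv h -> envP Pv h' -> envLe Pv h h' -> dom Pv T g -> dom Pv T g' ->
               le Pv T g g' -> le Pv T (Gh n h g) (Gh n h' g')).
    { intros n h h' g g' Hh Hh' Hhh Hg Hg' Hgg. apply le_arr. intros P v Hv.
      apply G2; try (apply upd_P; auto; apply upd_P; auto). apply upd_Le; auto. apply upd_Le; auto. apply le_refl. }
    assert (GC : forall n hc h gc g, envChain Pv hc -> envLub Pv hc h -> chain (dom Pv T) (le Pv T) gc ->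
               is_lub (dom Pv T) (le Pv T) gc g -> is_lub (dom Pv T) (le Pv T) (fun k => Gh n (hc k) (gc k)) (Gh n h g)).
    { intros n hc h gc g Hc Hl Hgc Hg. apply arrow_lub_of_pw.
      - apply GD. eapply envLub_P; eauto. apply Hg.
      - intros P v Hv. apply (G3 n P (fun k => upd (upd (hc k) f T (gc k)) x t1 v)).
        + apply envChain_upd. apply envChain_upd; auto. split; intros; auto. apply le_refl.
        + apply upd_Lub. apply upd_Lub; auto. apply lub_const; auto. apply le_refl. }
    pose (Lh := fun n (h : env Pv D) => lfp (dom Pv T) (le Pv T) (Gh n h) (botf Pv t1 t2)).
    assert (LP : forall n h, envP Pv h -> dom Pv T (Lh n h) /\ is_lub (dom Pv T) (le Pv T) (kl Pv t1 t2 (Gh n h)) (Lh n h) /\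
       le Pv T (Gh n h (Lh n h)) (Lh n h) /\
       (forall y, dom Pv T y -> le Pv T (Gh n h y) y -> le Pv T (Lh n h) y)).
    { intros n h Hh. apply (lfp_props Pv t1 t2 (Gh n h)).
      - intros; apply GD; auto.
      - intros; apply GM; auto. apply envLe_refl.
      - intros c g Hc Hg. apply (GC n (fun _ => h) h c g); auto. apply envChain_const; auto. apply envLub_const; auto. }
    assert (LM : forall n h h', envP Pv h -> envP Pv h' -> envLe Pv h h' -> le Pv T (Lh n h) (Lh n h')).
    { intros n h h' Hh Hh' Hhh. destruct (LP n h Hh) as (_&_&_&Hleast). destruct (LP n h' Hh') as (Hd'&_&Hpre'&_).
      apply Hleast; auto. eapply le_trans; [|apply Hpre']. apply GM; auto. apply le_refl. }
    assert (KD : forall n h j, envP Pv h -> dom Pv T (kl Pv t1 t2 (Gh n h) j)).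
    { intros n h j Hh. apply kl_dom. intros; apply GD; auto. }
    assert (KM : forall n h h' j, envP Pv h -> envP Pv h' -> envLe Pv h h' ->
       le Pv T (kl Pv t1 t2 (Gh n h) j) (kl Pv t1 t2 (Gh n h') j)).
    { intros n h h' j Hh Hh' Hhh. induction j. apply botf_le.
      change (le Pv T (Gh n h (kl Pv t1 t2 (Gh n h) j)) (Gh n h' (kl Pv t1 t2 (Gh n h') j))).
      apply GM; auto. }
    assert (KC : forall n hc h j, envChain Pv hc -> envLub Pv hc h ->
       is_lub (dom Pv T) (le Pv T) (fun k => kl Pv t1 t2 (Gh n (hc k)) j) (kl Pv t1 t2 (Gh n h) j)).
    { intros n hc h j Hc Hl. induction j.
      - apply lub_const. apply le_refl. apply botf_dom.
      - apply (GC n hc h (fun k => kl Pv t1 t2 (Gh n (hc k)) j)); auto.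
        split; intros k. apply KD. apply Hc. apply KM; apply Hc. }
    assert (LC : forall n hc h, envChain Pv hc -> envLub Pv hc h ->
       is_lub (dom Pv T) (le Pv T) (fun k => Lh n (hc k)) (Lh n h)).
    { intros n hc h Hc Hl. assert (Hh : envP Pv h) by (eapply envLub_P; eauto).
      split; [|split].
      - apply LP; auto.
      - intros k. apply LM; auto. apply Hc. apply envLub_ub; auto.
      - intros y Hy Hub. destruct (LP n h Hh) as (_&Hkl&_&_).
        apply Hkl; auto. intros j. apply (KC n hc h j Hc Hl); auto.
        intros k. eapply le_trans; [|apply (Hub k)]. destruct (LP n (hc k) (proj1 Hc k)) as (_&Hk&_). apply Hk. }
    split; [|split]; intros; cbn [den]; fold T.
    + change (domL (dom Pv t) (den A d2 n P (upd h f T (Lh n h)))).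
      apply G1'. apply upd_P; auto. apply LP; auto.
    + change (leL (le Pv t) (den A d2 n P (upd h f T (Lh n h))) (den A d2 n P (upd h' f T (Lh n h')))).
      apply G2'; try (apply upd_P; auto; apply LP; auto). apply upd_Le; auto.
    + change (is_lub (domL (dom Pv t)) (leL (le Pv t)) (fun k => den A d2 n P (upd (hc k) f T (Lh n (hc k))))
        (den A d2 n P (upd h f T (Lh n h)))).
      apply G3'.
      * apply envChain_upd; auto. split; intros k. apply LP, H. apply LM; apply H.
      * apply upd_Lub; auto.
  -
    destruct IHd as (G1&G2&G3). split; [|split]; intros; cbn [den]; auto.
  - destruct IHd as (G1&G2&G3). split; [|split]; intros; cbn [den]; auto.
  - destruct IHd as (G1&G2&G3). split; [|split]; intros; cbn [den];
      destruct (excluded_middle_informative (P p)); auto.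
    + right; left; auto.
    + apply leL_refl.
    + apply lub_const. apply leL_refl. right; left; auto.
  - destruct IHd1 as (G1&G2&G3). destruct IHd2 as (G1'&G2'&G3').
    split; [|split]; intros; cbn [den]; destruct (excluded_middle_informative (P p)); auto.
Qed.

End Good.

Section Safe.
Variables Pr Pv : Type.
Variable A : Pr -> pset Pv.

Fixpoint R (th : aty Pv) (t : ty) {struct th} : sem Pv t -> Prop :=
  match th with
  | AArr th1 Pi th2 =>
      match t as t0 return sem Pv t0 -> Prop with
      | TArr t1 t2 => fun f => forall P, psubset Pi P -> forall v, dom Pv t1 v -> R th1 t1 v ->
            (f P v <> Star /\ forall a, f P v = Val a -> R th2 t2 a)
      | TBool => fun _ => True
      end
  | ABool => fun _ => True
  end.

Definition RL th t (u : lift (sem Pv t)) : Prop := u <> Star /\ forall a, u = Val a -> R th t a.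

Lemma R_down th : forall t x y, le Pv t x y -> R th t y -> R th t x.
Proof.
  induction th as [|th1 IH1 Pi th2 IH2]; intros t x y Hxy Hy; [exact I|].
  destruct t as [|t1 t2]; [exact I|].
  simpl in Hy |- *. intros P HP v Hv Rv. destruct (Hy P HP v Hv Rv) as [Hns Hval].
  pose proof (proj1 (le_arr _ _ _ x y) Hxy P v Hv) as L.
  destruct (x P v) as [| |a] eqn:E.
  - split; [congruence| intros; congruence].
  - apply leL_Star in L. exfalso; apply Hns; exact L.
  - split; [congruence|]. intros a' Ha'. injection Ha' as <-.
    apply leL_Val in L as (b&Eb&Hab). apply IH2 with b.
    + destruct Hab; subst; auto. apply le_refl.
    + apply Hval; auto.
Qed.

Lemma R_sub th' th : subty th' th -> forall t v, R th' t v -> R th t v.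
Proof.
  induction 1 as [|th1 Pi1 th1' th2 Pi2 th2' S1 IH1 S2 IH2 HPi]; intros t v Hv; [exact I|].
  destruct t as [|t1 t2]; [exact I|].
  simpl in Hv |- *. intros P HP w Hw Rw.
  destruct (Hv P (fun q Hq => HP q (HPi q Hq)) w Hw (IH1 t1 w Rw)) as [H1 H2].
  split; auto.
Qed.

Lemma R_adm th : forall t c x, chain (dom Pv t) (le Pv t) c -> is_lub (dom Pv t) (le Pv t) c x ->
  (forall k, R th t (c k)) -> R th t x.
Proof.
  induction th as [|th1 IH1 Pi th2 IH2]; intros t c x Hc Hx Hk; [exact I|].
  destruct t as [|t1 t2]; [exact I|].
  simpl in Hk |- *. intros P HP v Hv Rv.
  pose proof (pw_of_arrow_lub Pv t1 t2 c x Hc Hx P v Hv) as Hl.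
  pose proof (pw_chain Pv t1 t2 c P v Hc Hv) as Hc'.
  destruct (lift_lub_cases_t Pv t2 _ _ Hc' Hl) as [(E&Hb)|[(E&[k Hs])|(a&k0&a0&E&Hk0&Hns&Hvv&Hvc&Ha)]];
    rewrite E.
  - split; [congruence| intros; congruence].
  - exfalso. apply (proj1 (Hk k P HP v Hv Rv)). exact Hs.
  - split; [congruence|]. intros a' Ha'. injection Ha' as <-.
    apply (IH2 t2 _ a Hvc Ha). intros j.
    apply (proj2 (Hk (k0 + j) P HP v Hv Rv)). apply (Hvv j).
Qed.

Definition envR {D : ctx} (G : var -> option (aty Pv)) (h : env Pv D) : Prop :=
  forall y th, G y = Some th ->
    match D y as o return envty Pv o -> Prop with Some t => R th t | None => fun _ => True end (h y).

Lemma lookup_R {D : ctx} G (h : env Pv D) x th t (Hx : D x = Some t) :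
  envR G h -> G x = Some th -> R th t (lookup h Hx).
Proof.
  intros H Hg. specialize (H x th Hg). unfold lookup. revert H. generalize (h x). rewrite Hx. auto.
Qed.

Lemma upd_R {D : ctx} G (h : env Pv D) x th t v :
  envR G h -> R th t v -> envR (ext G x th) (upd h x t v).
Proof.
  intros H Hv y th' Hy. unfold upd, ext in *. specialize (H y th').
  destruct (Nat.eqb y x).
  - injection Hy as <-; auto.
  - apply H. exact Hy.
Qed.

Lemma sqcup_mono (n : Pr) (Pi P : pset Pv) p : psubset Pi P -> psubset (sqcup A n Pi p) (sqcup A n P p).
Proof.
  intros H q. unfold sqcup. destruct (excluded_middle_informative (A n p)); unfold punion; intros [Hq|Hq] || intros Hq; auto.
Qed.

Lemma letrec_G_props D f x e1 t1 t2 (d1 : @has_type Pr Pv (ext (ext D f (TArr t1 t2)) x t1) e1 t2) n (h : env Pv D) :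
  envP Pv h ->
  let G := fun g : sem Pv (TArr t1 t2) =>
    ((fun P' v => den A d1 n P' (upd (upd h f (TArr t1 t2) g) x t1 v)) : sem Pv (TArr t1 t2)) in
  (forall g, dom Pv (TArr t1 t2) g -> dom Pv (TArr t1 t2) (G g)) /\
  (forall g g', dom Pv (TArr t1 t2) g -> dom Pv (TArr t1 t2) g' -> le Pv (TArr t1 t2) g g' ->
     le Pv (TArr t1 t2) (G g) (G g')) /\
  (forall c y, chain (dom Pv (TArr t1 t2)) (le Pv (TArr t1 t2)) c -> is_lub (dom Pv (TArr t1 t2)) (le Pv (TArr t1 t2)) c y ->
     is_lub (dom Pv (TArr t1 t2)) (le Pv (TArr t1 t2)) (fun k => G (c k)) (G y)).
Proof.
  intros Hh G. destruct (good_all Pr Pv A d1) as (G1&G2&G3). set (T := TArr t1 t2) in *.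
  assert (GD : forall g, dom Pv T g -> dom Pv T (G g)).
  { intros g Hg. apply dom_arr. split; [|split].
    - intros P v Hv. apply G1. apply upd_P; auto. apply upd_P; auto.
    - intros P v v' Hv Hv' Hvv. apply G2; try (apply upd_P; auto; apply upd_P; auto).
      apply upd_Le; auto. apply envLe_refl.
    - intros P c v Hc Hv. apply (G3 n P (fun k => upd (upd h f T g) x t1 (c k))).
      + apply envChain_upd; auto. apply envChain_const; auto. apply upd_P; auto.
      + apply upd_Lub; auto. apply envLub_const; auto. apply upd_P; auto. }
  split; [auto|split].
  - intros g g' Hg Hg' Hgg. apply le_arr. intros P v Hv.
    apply G2; try (apply upd_P; auto; apply upd_P; auto). apply upd_Le; auto. apply upd_Le; auto.
    apply envLe_refl. apply le_refl.
  - intros gc g Hgc Hg. apply arrow_lub_of_pw.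
    + apply GD. apply Hg.
    + intros P v Hv. apply (G3 n P (fun k => upd (upd h f T (gc k)) x t1 v)).
      * apply envChain_upd. apply envChain_upd; auto. apply envChain_const; auto. split; intros; auto. apply le_refl.
      * apply upd_Lub. apply upd_Lub; auto. apply envLub_const; auto. apply lub_const; auto. apply le_refl.
Qed.

Lemma main {D e t} (d : @has_type Pr Pv D e t) :
  forall G n th Pi, anal A G n e th Pi -> forall P (h : env Pv D), psubset Pi P -> envP Pv h -> envR G h ->
  RL th t (den A d n P h).
Proof.
  induction d; intros G n0 th Pi HA P h HP Hh HR; inversion HA; subst; cbn [den].
  - split; [congruence|]. intros; exact I.
  - split; [congruence|]. intros a Ha. injection Ha as <-. eapply lookup_R; eauto.
  - destruct (IHd1 _ _ _ _ H4 P h (fun q Hq => HP q (or_introl Hq)) Hh HR) as [Hns _].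
    destruct (den A d1 n0 P h) as [| |b]; simpl.
    + split; [congruence| intros; congruence].
    + contradiction.
    + destruct b; [apply (IHd2 _ _ _ _ H7)| apply (IHd3 _ _ _ _ H8)]; auto;
        intros q Hq; apply HP; right; [left|right]; auto.
  - split; [congruence|]. intros a Ha; injection Ha as <-. simpl. intros P' HP' v Hv Rv.
    exact (IHd _ _ _ _ H5 P' (upd h x t1 v) HP' (upd_P Pv h x t1 v Hh Hv) (upd_R G h x th1 t1 v HR Rv)).
  - destruct (IHd1 _ _ _ _ H1 P h (fun q Hq => HP q (or_intror (or_introl Hq))) Hh HR) as [Ns1 V1].
    destruct (IHd2 _ _ _ _ H4 P h (fun q Hq => HP q (or_intror (or_intror Hq))) Hh HR) as [Ns2 V2].
    pose proof (proj1 (good_all Pr Pv A d1) n0 P h Hh) as D1.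
    pose proof (proj1 (good_all Pr Pv A d2) n0 P h Hh) as D2.
    revert Ns1 V1 D1. destruct (den A d1 n0 P h) as [| |F]; intros Ns1 V1 D1; simpl.
    + split; [congruence| intros; congruence].
    + contradiction.
    + revert Ns2 V2 D2. destruct (den A d2 n0 P h) as [| |v]; intros Ns2 V2 D2; simpl.
      * split; [congruence| intros; congruence].
      * contradiction.
      * specialize (V1 F eq_refl). specialize (V2 v eq_refl). simpl in V1.
        exact (V1 P (fun q Hq => HP q (or_introl Hq)) v (domL_Val_inv Pv t1 v D2) (R_sub _ _ H7 t1 v V2)).
  - destruct (letrec_G_props D f x e1 t1 t2 d1 n0 h Hh) as (GD&GM&GC).
    destruct (lfp_props Pv t1 t2 _ GD GM GC) as (HLd&HLl&_&_).
    apply (IHd2 _ _ _ _ H8); auto.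
    + intros q Hq; apply HP; right; auto.
    + apply upd_P; auto.
    + apply upd_R; auto.
      assert (RK : forall k, R (AArr th1 Pi0 th2) (TArr t1 t2) (kl Pv t1 t2 (fun g : sem Pv (TArr t1 t2) =>
          ((fun P' v => den A d1 n0 P' (upd (upd h f (TArr t1 t2) g) x t1 v)) : sem Pv (TArr t1 t2))) k)).
      { intros k. induction k.
        * intros P' _ v _ _. unfold kl, botf; simpl. split; [congruence| intros; congruence].
        * intros P' HP' v Hv Rv.
          exact (IHd1 _ _ _ _ H7 P' _ HP' (upd_P Pv _ x t1 v (upd_P Pv h f _ _ Hh (kl_dom Pv t1 t2 _ GD k)) Hv)
                 (upd_R _ _ x th1 t1 v (upd_R G h f _ _ _ HR IHk) Rv)). }
      exact (R_adm _ _ _ _ (kl_chain Pv t1 t2 _ GD GM) HLl RK).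
  - apply (IHd G n th Pi); auto. intros q Hq; split; auto.
  - apply (IHd G n0 th (sqcup A n0 Pi p)); auto. apply sqcup_mono; auto.
  - destruct (excluded_middle_informative (P p)) as [Hp|Hp].
    + apply (IHd G n0 th Pi0); auto. intros q Hq; apply HP; left; auto.
    + exfalso. apply Hp. apply HP. right. reflexivity.
  - destruct (excluded_middle_informative (P p)).
    + apply (IHd1 G n0 th Pi1); auto. intros q Hq; apply HP; left; auto.
    + apply (IHd2 G n0 th Pi2); auto. intros q Hq; apply HP; right; auto.
Qed.

End Safe.

Theorem theorem1 (Pr Pv : Type) (A : Pr -> pset Pv) (e : expr Pr Pv) (n : Pr)
  (th : aty Pv) (Pi : pset Pv) :
  anal A emptyc n e th Pi ->
  forall P : pset Pv, psubset Pi P ->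
  forall d : has_type emptyc e (erase th),
    den A d n P (empty_env Pv) <> Star.
Proof.
  intros HA P HP d.
  apply (main Pr Pv A d emptyc n th Pi HA P (empty_env Pv) HP).
  - intros y. exact I.
  - intros y th' Hy. discriminate Hy.
Qed.
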